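(* For every $\epsilon,n$, every layered graph $G$ over $\Sigma_{in}$ of depth $n$, every $\epsilon$-sensitive $(G,\Sigma_{out})$-code $\mathsf{C}$, and all $x\in\Sigma_{in}^n$ and $w\in\Sigma_{out}^n$, letting $J$ be the set of indices $i$ with $\mathsf{C}(x)[i]=w[i]$, it holds that $\mathsf{CDec}(w[1:i])=v(x[1:i])$ for all but at most $2\epsilon n$ values of $i\in J$.
   Context: A layered graph over alphabet $\Sigma$ of depth $n$ is a directed graph whose vertices are partitioned into layers $0,\dots,n$, with exactly one vertex (the root) in layer $0$, and each vertex in layer $i<n$ has exactly $|\Sigma|$ out-edges to layer $i+1$ labeled by the distinct elements of $\Sigma$ (endpoints need not be distinct). A string $p\in\Sigma_{in}^i$ determines a unique root path ending at vertex $v(p)$ in layer $i$. A $(G,\Sigma_{out})$-code $\mathsf{C}$ assigns an element of $\Sigma_{out}$ to each edge; $\mathsf{C}(p)$ is the label string along $p$. Suffix distance: $\Delta_{sfx}(a,b)=\max_{0\le i\le m-1}\frac{\Delta(a[i+1:m],b[i+1:m])}{m-i}$ for $a,b\in\Sigma^m$, $\Delta$ Hamming distance. $L_i(\mathsf{C},w,\epsilon)=\{v(p):p\in\Sigma_{in}^i,\ \Delta_{sfx}(\mathsf{C}(p),w[1:i])<1-\epsilon\}$, $L(\mathsf{C},w,\epsilon)=\bigcup_{i=1}^nL_i(\mathsf{C},w,\epsilon)$. For $S\subseteq L(\mathsf{C},w,\epsilon)$, a prefix tree of $S$ is a union of paths $p(v)$ ($v\in S$) from the root to $v$, each with $\Delta_{sfx}(\mathsf{C}(p(v)),w[1:|p(v)|])<1-\epsilon$,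 that forms a rooted tree; $\mathcal{PT}(\mathsf{C},w,\epsilon)$ is the set of all such prefix trees of subsets of $L(\mathsf{C},w,\epsilon)$. $agr(\mathsf{C}(H),w(H))$ is the number of edges of $H$ whose $\mathsf{C}$-label equals $w[i]$, $i$ the edge's depth. $\mathsf{C}$ is $\epsilon$-sensitive if for all $w\in\Sigma_{out}^n$ and all $PT\in\mathcal{PT}(\mathsf{C},w,\epsilon)$, $agr(\mathsf{C}(PT),w(PT))\le(1+\epsilon)n$. The decoder $\mathsf{CDec}$, on input $w'\in\Sigma_{out}^i$, outputs the vertex $v$ such that there exists $p\in\Sigma_{in}^i$ with $v(p)=v$ and $\Delta_{sfx}(\mathsf{C}(p),w')<1-\epsilon$ if exactly one such vertex exists, and outputs $\perp$ otherwise. *)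

(* Defs.v *)
From mathcomp Require Import all_boot all_order all_algebra.
Set Implicit Arguments. Unset Strict Implicit. Unset Printing Implicit Defensive.
Import Order.TTheory GRing.Theory Num.Theory.
Local Open Scope ring_scope.

(* Layered graphs.  A layered graph over alphabet Sin of depth n is given  *)
(* by a finite vertex type V, a layer map, a root, and the out-edge map    *)
(* next : V -> Sin -> V : the edge of vertex v (in layer < n) labeled a    *)
(* goes to next v a.  An edge is identified with the pair (v, a).          *)
(* Values of next on layer-n vertices are irrelevant (never used).         *)
Definition layered_graph (Sin V : finType) (n : nat)
  (layer : V -> nat) (root : V) (next : V -> Sin -> V) : Prop :=
  [/\ forall v, (layer v <= n)%N,
      layer root = 0%N,
      forall v, layer v = 0%N -> v = root
    & forall v a, (layer v < n)%N -> layer (next v a) = (layer v).+1 ].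

Fixpoint path_edges (Sin V : Type) (next : V -> Sin -> V) (v : V) (p : seq Sin)
  : seq (V * Sin) :=
  match p with
  | [::] => [::]
  | a :: p' => (v, a) :: path_edges next (next v a) p'
  end.

Definition vend (Sin V : Type) (next : V -> Sin -> V) (root : V) (p : seq Sin) : V :=
  foldl next root p.

Definition code_of (Sin Sout V : Type) (next : V -> Sin -> V) (root : V)
  (C : V -> Sin -> Sout) (p : seq Sin) : seq Sout :=
  map (fun e => C e.1 e.2) (path_edges next root p).

Definition hamming (T : eqType) (a b : seq T) : nat :=
  count (fun xy => xy.1 != xy.2) (zip a b).

(* Suffix distance: max_{0 <= i <= m-1} Delta(a[i+1:m], b[i+1:m]) / (m - i),
   with 0-indexed i, a[i+1:m] = drop i a.  (Only used with m >= 1.) *)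
Definition sfx_dist (R : realFieldType) (T : eqType) (a b : seq T) : R :=
  \big[Num.max/0]_(i < size a)
     ((hamming (drop i a) (drop i b))%:R / (size a - i)%:R).

(* Prefix trees of subsets of L(C, w, eps), given by the list of strings
   p(v) (v in S) determining the root paths. *)
Definition prefix_tree (R : realFieldType) (Sin Sout V : finType) (n : nat)
  (next : V -> Sin -> V) (root : V) (C : V -> Sin -> Sout)
  (eps : R) (w : seq Sout) (ps : seq (seq Sin)) : Prop :=
  [/\ (* each path ends in some L_i, 1 <= i <= n *)
      forall p, p \in ps ->
        [/\ (1 <= size p)%N, (size p <= n)%N &
            sfx_dist R (code_of next root C p) (take (size p) w) < 1 - eps],
      (* one path per vertex of S *)
      uniq (map (vend next root) ps)
    & (* the union of the paths is a rooted tree: no vertex has two distinct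
         incoming edges in the union *)
      forall e1 e2, e1 \in flatten (map (path_edges next root) ps) ->
                    e2 \in flatten (map (path_edges next root) ps) ->
                    next e1.1 e1.2 = next e2.1 e2.2 -> e1 = e2 ].

(* agr(C(PT), w(PT)) : number of edges of the union whose label equals
   w at the edge's depth (the edge leaving layer j has depth j+1, i.e.
   0-indexed position j of w). *)
Definition agr (Sin Sout V : finType) (layer : V -> nat)
  (next : V -> Sin -> V) (root : V) (C : V -> Sin -> Sout)
  (w : seq Sout) (ps : seq (seq Sin)) : nat :=
  count (fun e : V * Sin => onth w (layer e.1) == Some (C e.1 e.2))
        (undup (flatten (map (path_edges next root) ps))).

Definition eps_sensitive (R : realFieldType) (Sin Sout V : finType) (n : nat)
  (layer : V -> nat) (next : V -> Sin -> V) (root : V)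
  (C : V -> Sin -> Sout) (eps : R) : Prop :=
  forall (w : seq Sout), size w = n ->
  forall ps : seq (seq Sin), prefix_tree n next root C eps w ps ->
    (agr layer next root C w ps)%:R <= (1 + eps) * n%:R.

(* The decoder CDec: on w' of length i, the unique vertex v(p), p in Sin^i,
   with sfx_dist(C(p), w') < 1 - eps, if there is exactly one; else None (= ⊥). *)
Definition CDec (R : realFieldType) (Sin Sout V : finType)
  (next : V -> Sin -> V) (root : V) (C : V -> Sin -> Sout) (eps : R)
  (w' : seq Sout) : option V :=
  let cands := undup [seq vend next root (val t) | t <- enum
      [pred t : (size w').-tuple Sin |
         sfx_dist R (code_of next root C (val t)) w' < 1 - eps]] in
  if cands is [:: v] then Some v else None.

(* Main.v *)
Require Import Defs.
From mathcomp Require Import all_boot all_order all_algebra.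
From mathcomp Require Import ring lra zify.
Import Order.TTheory GRing.Theory Num.Theory.
Local Open Scope ring_scope.
Set Implicit Arguments. Unset Strict Implicit. Unset Printing Implicit Defensive.


Lemma take_zipA (S T : Type) k (a : seq S) (b : seq T) :
  take k (zip a b) = zip (take k a) (take k b).
Proof. by elim: a b k => [|x a IH] [|y b] [|k] //=; rewrite IH. Qed.

Lemma drop_zipA (S T : Type) k (a : seq S) (b : seq T) :
  drop k (zip a b) = zip (drop k a) (drop k b).
Proof.
elim: a b k => [|x a IH] [|y b] [|k] //=.
- by case: (drop k b).
- by case: (drop k a).
Qed.

Section Psi.
Variable R : realFieldType.
Variable eps : R.
Hypothesis eps_gt0 : 0 < eps.

Definition psiF (acc : R) (s : seq bool) : R :=
  foldl (fun acc (b : bool) => Num.min acc 0 + (b%:R : R) - eps) acc s.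
Definition psi s := psiF 0 s.

Lemma psi_rcons s b : psi (rcons s b) = Num.min (psi s) 0 + (b%:R : R) - eps.
Proof. by rewrite /psi /psiF foldl_rcons. Qed.

Lemma minr0E (x : R) : Num.min x 0 = if x <= 0 then x else 0.
Proof. by rewrite minEle. Qed.

Lemma min0_le (x : R) : Num.min x 0 <= x.
Proof. rewrite minr0E; case: (lerP x 0) => h; lra. Qed.

Lemma min0_le0 (x : R) : Num.min x 0 <= 0.
Proof. by rewrite minr0E; case: ifP. Qed.

Lemma min0_mono (x y : R) : x <= y -> Num.min x 0 <= Num.min y 0.
Proof.
move=> h; rewrite !minr0E; case: (lerP x 0) => h1; case: (lerP y 0) => h2; lra.
Qed.

Lemma psi_le s k : (k < size s)%N ->
  psi s <= (count id (drop k s))%:R - eps * (size (drop k s))%:R.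
Proof.
elim/last_ind: s k => [|s b IH] k //=.
rewrite size_rcons ltnS leq_eqVlt => /orP [/eqP-> | hk].
- rewrite psi_rcons drop_rcons // drop_size /= addn0 mulr1.
  have := min0_le0 (psi s); lra.
- rewrite psi_rcons drop_rcons ?(ltnW hk) // size_rcons -cats1 count_cat /= addn0.
  rewrite natrD -addn1 natrD.
  have := IH _ hk; have := min0_le (psi s); lra.
Qed.

Lemma psi_ex s : s != [::] -> exists2 k, (k < size s)%N &
  psi s = (count id (drop k s))%:R - eps * (size (drop k s))%:R.
Proof.
elim/last_ind: s => [|s b IH] // _.
case: (eqVneq s [::]) => [->|sn0].
  exists 0%N => //=; rewrite /psi /psiF /= minxx addn0 mulr1; lra.
rewrite psi_rcons minr0E; case: ifP => hle.
- have [k hk ->] := IH sn0; exists k; first by rewrite size_rcons ltnS ltnW.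
  rewrite drop_rcons ?(ltnW hk) // size_rcons -cats1 count_cat /= addn0.
  rewrite natrD -addn1 natrD; lra.
- exists (size s); first by rewrite size_rcons.
  rewrite drop_rcons // drop_size /= addn0 mulr1; lra.
Qed.

Lemma psi_posP s : s != [::] ->
  (0 < psi s) <-> (forall k, (k < size s)%N ->
     eps * (size (drop k s))%:R < (count id (drop k s))%:R).
Proof.
move=> sn0; split.
- move=> h k hk; have := psi_le hk; lra.
- move=> h; have [k hk ->] := psi_ex sn0; have := h k hk; lra.
Qed.

Lemma psiF_mono a a' s t : a <= a' -> size s = size t ->
  (forall i, nth false s i -> nth false t i) -> psiF a s <= psiF a' t.
Proof.
elim: s t a a' => [|x s IH] [|y t] a a' //= haa [] hsz hi.
apply: IH => //; last by move=> i; apply: (hi i.+1).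
have hxy : (x%:R : R) <= y%:R.
  by case: x hi => [/(_ 0%N) /= ->|] //=; case: y.
have := min0_mono haa; lra.
Qed.

Lemma psi_mono s t : size s = size t ->
  (forall i, nth false s i -> nth false t i) -> psi s <= psi t.
Proof. by move=> *; apply: psiF_mono. Qed.

Lemma psi_ext s m : eps < 1 -> 0 < psi s -> 0 < psi (s ++ nseq m true).
Proof.
move=> he; elim: m => [|m IH] hp; first by rewrite cats0.
have -> : s ++ nseq m.+1 true = rcons (s ++ nseq m true) true.
  by rewrite -cats1 -catA /=; congr (_ ++ _); elim: m {IH} => //= m ->.
rewrite psi_rcons minr0E; have := IH hp.
by case: (lerP (psi (s ++ nseq m true)) 0) => h /=; lra.
Qed.

Lemma psi_last s : 0 < psi s -> (0 < size s)%N -> nth false s (size s).-1.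
Proof.
case/lastP: s => [|s b] //= hp _.
rewrite size_rcons /= nth_rcons ltnn eqxx.
move: hp; rewrite psi_rcons; have := min0_le0 (psi s) => h1 h2.
have : (0:R) < b%:R.
  move: h1 h2 eps_gt0. set bb := (b%:R : R). set mm := Num.min _ _. move=> h1 h2 h3. lra.
clear h1 h2; by case: b => //=; rewrite ltxx.
Qed.

Lemma potential s :
  (count (fun k => nth false s k && ~~ (0 < psi (take k.+1 s))) (iota 0 (size s)))%:R
    <= eps * (size s)%:R + Num.min (psi s) 0.
Proof.
elim/last_ind: s => [|s b IH]; first by rewrite /= /psi /= minxx mulr0 addr0.
rewrite size_rcons -addn1 iotaD add0n /= count_cat /= addn0.
rewrite (@eq_in_count _ _ (fun k => nth false s k && ~~ (0 < psi (take k.+1 s)))); last first.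
  move=> k; rewrite mem_iota add0n => /andP [_ hk].
  by rewrite nth_rcons hk -cats1 takel_cat.
rewrite nth_rcons ltnn eqxx take_oversize ?size_rcons // psi_rcons.
rewrite natrD.
have h1 := min0_le (psi s); have h2 := min0_le0 (psi s).
move: IH; set h := Num.min (psi s) 0 => IH.
have he : 0 < eps := eps_gt0.
rewrite natrD minr0E; case: (lerP (h + b%:R - eps) 0) => hh;
  case: b hh => /= hh; have h3 : h <= 0 := min0_le0 _.
  rewrite !mulrDr. all: try lra.
Qed.

Lemma potential' s :
  (count (fun k => nth false s k && ~~ (0 < psi (take k.+1 s))) (iota 0 (size s)))%:R
    <= eps * (size s)%:R.
Proof. have := potential s; have := min0_le0 (psi s); lra. Qed.

End Psi.

Lemma le_bigmax_seq (R : realFieldType) (I : eqType) (r : seq I) (F : I -> R) i :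
  i \in r -> F i <= \big[Num.max/0]_(j <- r) F j.
Proof.
elim: r => [|x r IH] //; rewrite inE big_cons /= => /orP [/eqP ->|hi].
- by rewrite le_max lexx.
- by rewrite le_max (IH hi) orbT.
Qed.

Lemma ge0_bigmax_seq (R : realFieldType) (I : eqType) (r : seq I) (F : I -> R) :
  0 <= \big[Num.max/0]_(j <- r) F j.
Proof.
elim: r => [|x r IH]; first by rewrite big_nil.
by rewrite big_cons le_max IH orbT.
Qed.

Lemma bigmax_ltP (R : realFieldType) m (F : 'I_m -> R) c :
  (\big[Num.max/0]_(i < m) F i < c) <-> (0 < c /\ forall i, F i < c).
Proof.
split.
- move=> h; have h' := h; split.
    exact: (le_lt_trans (ge0_bigmax_seq _ _) h).
  move=> i; exact: (le_lt_trans (le_bigmax_seq _ (mem_index_enum i)) h').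
- move=> [h0 hF]; apply: (big_ind (fun x => x < c)) => //.
  by move=> x y hx hy; rewrite gt_max hx.
Qed.

Lemma sfx_psi (R : realFieldType) (eps : R) (T : eqType) (a b : seq T) :
  size a = size b -> (0 < size a)%N -> eps < 1 ->
  (sfx_dist R a b < 1 - eps) <-> (0 < psi eps [seq xy.1 == xy.2 | xy <- zip a b]).
Proof.
move=> hab ha he.
set z := zip a b; set s := [seq _ | _ <- z].
have hz : size z = size a by rewrite size_zip hab minnn.
have hs : size s = size a by rewrite size_map.
have sn0 : s != [::] by rewrite -size_eq0 hs -lt0n.
rewrite /sfx_dist bigmax_ltP psi_posP //.
have key : forall k, (k < size a)%N ->
  ((hamming (drop k a) (drop k b))%:R / (size a - k)%:R < 1 - eps) =
  (eps * (size (drop k s))%:R < (count id (drop k s))%:R).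
  move=> k hk.
  have hL : (0 : R) < (size a - k)%:R by rewrite ltr0n subn_gt0.
  rewrite ltr_pdivrMr //.
  have hc : (count id (drop k s) + hamming (drop k a) (drop k b) = size a - k)%N.
    rewrite /hamming -drop_zipA -/z /s -map_drop count_map.
    have -> : (size a - k)%N = size (drop k z) by rewrite size_drop hz.
    rewrite -(count_predC (fun xy : T * T => xy.1 == xy.2)).
    by congr (_ + _)%N; apply: eq_count => xy.
  have hd : size (drop k s) = (size a - k)%N by rewrite size_drop hs.
  rewrite hd -hc natrD.
  apply/idP/idP => h; lra.
split.
- move=> [h0 hF] k hk; rewrite hs in hk.
  by rewrite -key //; apply: (hF (Ordinal hk)).
- move=> h; split; first lra.
  move=> i; rewrite key //; apply: h; by rewrite hs.
Qed.

Lemma onth_nthE (T : Type) (s : seq T) k d : (k < size s)%N -> onth s k = Some (nth d s k).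
Proof. by elim: s k => [|x s IH] [|k] //= hk; rewrite IH. Qed.

Lemma seq_single (T : eqType) (s : seq T) c : uniq s -> c \in s ->
  (forall u, u \in s -> u = c) -> s = [:: c].
Proof.
case: s => [|a s] //= /andP [ha hu] _ hall.
have ac : a = c by apply: hall; rewrite inE eqxx.
case: s ha hu hall => [|b s] //= ha _ hall; first by rewrite ac.
have bc : b = c by apply: hall; rewrite !inE eqxx orbT.
by move: ha; rewrite inE ac bc eqxx.
Qed.

Section Paths.
Variables (Sin V : eqType) (next : V -> Sin -> V).

Lemma pe_rcons v p a : path_edges next v (rcons p a) = rcons (path_edges next v p) (foldl next v p, a).
Proof. by elim: p v => //= b p IH v; rewrite IH. Qed.

Lemma size_pe v p : size (path_edges next v p) = size p.
Proof. by elim: p v => //= b p IH v; rewrite IH. Qed.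

Lemma pe_cat v p q : path_edges next v (p ++ q) = path_edges next v p ++ path_edges next (foldl next v p) q.
Proof. by elim: p v => //= b p IH v; rewrite IH. Qed.

Lemma pe_take v k p : path_edges next v (take k p) = take k (path_edges next v p).
Proof. by elim: p v k => [|a p IH] v [|k] //=; rewrite IH. Qed.

Lemma nth_pe v p k e0 a0 : (k < size p)%N ->
  nth e0 (path_edges next v p) k = (foldl next v (take k p), nth a0 p k).
Proof. by elim: p v k => [|a p IH] v [|k] //= hk; rewrite IH. Qed.

Lemma next_nth_pe v p k a0 : (k < size p)%N ->
  next (foldl next v (take k p)) (nth a0 p k) = foldl next v (take k.+1 p).
Proof. by move=> hk; rewrite (take_nth a0) // foldl_rcons. Qed.

Lemma mem_pe v p e a0 : e \in path_edges next v p ->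
  exists2 k, (k < size p)%N & e = (foldl next v (take k p), nth a0 p k).
Proof.
case/(nthP e) => k; rewrite size_pe => hk <-; exists k => //.
exact: nth_pe.
Qed.
End Paths.
Arguments mem_pe [Sin V] next [v p e] a0.

Section Graph.
Variables (R : realFieldType) (eps : R) (n : nat) (Sin Sout V : finType)
  (layer : V -> nat) (root : V) (next : V -> Sin -> V) (C : V -> Sin -> Sout).
Hypothesis eps_gt0 : 0 < eps.
Hypothesis eps_lt1 : eps < 1.
Hypothesis HG : layered_graph n layer root next.

Local Notation vend' := (vend next root).
Local Notation code := (code_of next root C).

Lemma size_code p : size (code p) = size p.
Proof. by rewrite /code_of size_map size_pe. Qed.

Lemma code_rcons p a : code (rcons p a) = rcons (code p) (C (vend' p) a).
Proof. by rewrite /code_of pe_rcons map_rcons. Qed.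

Lemma code_take k p : code (take k p) = take k (code p).
Proof. by rewrite /code_of pe_take map_take. Qed.

Lemma nth_code p k c0 a0 : (k < size p)%N ->
  nth c0 (code p) k = C (vend' (take k p)) (nth a0 p k).
Proof.
move=> hk; rewrite /code_of (nth_map (root, a0)) ?size_pe //.
by rewrite (nth_pe _ _ _ a0).
Qed.

Lemma vend_rcons p a : vend' (rcons p a) = next (vend' p) a.
Proof. by rewrite /vend foldl_rcons. Qed.

Lemma layer_vend p : (size p <= n)%N -> layer (vend' p) = size p.
Proof.
case: HG => _ hroot _ hnext.
elim/last_ind: p => [|p a IH] /=; first by rewrite /vend /= hroot.
rewrite size_rcons => h; rewrite vend_rcons hnext IH ?(ltnW h) //.
Qed.

Definition bitsw (ww : seq Sout) p :=
  [seq xy.1 == xy.2 | xy <- zip (code p) (take (size p) ww)].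
Definition Psi ww p := psi eps (bitsw ww p).
Definition closeb ww p := sfx_dist R (code p) (take (size p) ww) < 1 - eps.

Lemma size_bitsw ww p : (size p <= size ww)%N -> size (bitsw ww p) = size p.
Proof. by move=> h; rewrite size_map size_zip size_code size_takel // minnn. Qed.

Lemma nth_bitsw ww p k c0 x0 : (k < size p)%N -> (size p <= size ww)%N ->
  nth false (bitsw ww p) k = (nth c0 (code p) k == nth x0 ww k).
Proof.
move=> hk hp.
rewrite (nth_map (c0, x0)); last by rewrite size_zip size_code size_takel // minnn.
by rewrite nth_zip ?size_code ?size_takel // nth_take.
Qed.

Lemma bitsw_rcons ww p a x0 : (size p < size ww)%N ->
  bitsw ww (rcons p a) = rcons (bitsw ww p) (C (vend' p) a == nth x0 ww (size p)).
Proof.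
move=> h; rewrite /bitsw size_rcons code_rcons (take_nth x0) // zip_rcons ?map_rcons //.
by rewrite size_code size_takel // ltnW.
Qed.

Lemma bitsw_take ww p k : (size p <= size ww)%N -> bitsw ww (take k p) = take k (bitsw ww p).
Proof.
move=> h; rewrite /bitsw -map_take take_zipA code_take size_take_min take_min.
by congr (map _ (zip _ _)).
Qed.

Lemma closebE ww p : (0 < size p)%N -> (size p <= size ww)%N ->
  closeb ww p = (0 < Psi ww p).
Proof.
move=> h0 h1; apply/idP/idP => h.
- by apply/(sfx_psi (eps:=eps)) => //; rewrite ?size_code ?size_takel.
- by apply/(sfx_psi (eps:=eps)) => //; rewrite ?size_code ?size_takel.
Qed.

Lemma Psi_rcons ww p a x0 : (size p < size ww)%N ->
  Psi ww (rcons p a) = Num.min (Psi ww p) 0 + (C (vend' p) a == nth x0 ww (size p))%:R - eps.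
Proof. by move=> h; rewrite /Psi (@bitsw_rcons ww p a x0 h) psi_rcons. Qed.

Lemma part2 x w (x0 : Sout) : size x = n -> size w = n ->
  (count (fun k => (onth (code x) k == onth w k) && ~~ closeb w (take k.+1 x))
     (iota 0 n))%:R <= eps * n%:R.
Proof.
move=> hx hw.
set s := bitsw w x.
have hs : size s = n by rewrite size_bitsw hx ?hw.
have h := potential' eps_gt0 s; rewrite hs in h; apply: (le_trans _ h).
rewrite ler_nat; apply/eq_leq/eq_in_count => k; rewrite mem_iota add0n => /andP [_ hk].
have hkx : (k < size x)%N by rewrite hx.
congr (_ && ~~ _).
- rewrite (onth_nthE x0) ?size_code // (onth_nthE x0) ?hw //=.
  by rewrite (@nth_bitsw w x k x0 x0) ?hx ?hw.
- rewrite closebE ?size_takel ?hx ?hw //.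
  by rewrite /Psi bitsw_take ?hx ?hw.
Qed.

Definition D2 (w' : seq Sout) :=
  [exists t1 : (size w').-tuple Sin, exists t2 : (size w').-tuple Sin,
    [&& sfx_dist R (code (val t1)) w' < 1 - eps,
        sfx_dist R (code (val t2)) w' < 1 - eps & vend' (val t1) != vend' (val t2)]].

Lemma part3 x w k : size x = n -> size w = n -> (k < n)%N ->
  (onth (code x) k == onth w k) &&
  (CDec next root C eps (take k.+1 w) != Some (vend' (take k.+1 x))) ->
  D2 (take k.+1 w) || ((onth (code x) k == onth w k) && ~~ closeb w (take k.+1 x)).
Proof.
move=> hx hw hk /andP [ha hc].
case hcl: (closeb w (take k.+1 x)); last by rewrite ha orbT.
apply/orP; left; case hD: (D2 _) => //; exfalso; move/negP: hc; apply.
set w' := take k.+1 w.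
have hsz : size (take k.+1 x) == size w' by rewrite !size_takel ?hx ?hw.
pose t0 : (size w').-tuple Sin := Tuple hsz.
have Pt0 : sfx_dist R (code (val t0)) w' < 1 - eps.
  move: hcl; rewrite /closeb /= size_takel ?hx //.
rewrite /CDec.
set cands := undup _.
suff -> : cands = [:: vend' t0] by [].
apply: seq_single; first exact: undup_uniq.
- by rewrite mem_undup; apply: map_f; rewrite mem_enum inE.
- move=> u; rewrite mem_undup => /mapP [t1]; rewrite mem_enum inE => Pt1 ->.
  apply/eqP; case hne: (vend' t1 == vend' t0) => //.
  suff : D2 (take k.+1 w) by rewrite hD.
  apply/existsP; exists t1; apply/existsP; exists t0; by rewrite Pt1 Pt0 hne.
Qed.

End Graph.

Section Tree.
Variables (R : realFieldType) (eps : R) (n : nat) (Sin Sout V : finType)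
  (layer : V -> nat) (root : V) (next : V -> Sin -> V) (C : V -> Sin -> Sout).
Hypothesis eps_gt0 : 0 < eps.
Hypothesis eps_lt1 : eps < 1.
Hypothesis HG : layered_graph n layer root next.
Variable w : seq Sout.
Hypothesis hw : size w = n.
Variable x0 : Sout.

Local Notation vend' := (vend next root).
Local Notation code := (code_of next root C).
Local Notation PsiW := (Psi eps root next C w).

Definition Qb j (B : V -> seq Sin) v (e : V * Sin) : bool :=
  [&& next e.1 e.2 == v, vend' (B e.1) == e.1 & size (B e.1) == j].

Fixpoint Bt (j : nat) (v : V) {struct j} : seq Sin :=
  match j with
  | 0 => [::]
  | j'.+1 =>
    match [pick e | Qb j' (Bt j') v e &&
            [forall e', Qb j' (Bt j') v e' ==>
               (PsiW (rcons (Bt j' e'.1) e'.2) <= PsiW (rcons (Bt j' e.1) e.2))]] with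
    | Some e => rcons (Bt j' e.1) e.2
    | None => Bt j' v
    end
  end.

Lemma Bt_S j v : Bt j.+1 v =
    match [pick e | Qb j (Bt j) v e &&
            [forall e', Qb j (Bt j) v e' ==>
               (PsiW (rcons (Bt j e'.1) e'.2) <= PsiW (rcons (Bt j e.1) e.2))]] with
    | Some e => rcons (Bt j e.1) e.2
    | None => Bt j v
    end.
Proof. by []. Qed.

Definition valid j v := (vend' (Bt j v) == v) && (size (Bt j v) == j).

Lemma Bt_opt p : (size p <= n)%N ->
  valid (size p) (vend' p) /\ PsiW p <= PsiW (Bt (size p) (vend' p)).
Proof.
elim/last_ind: p => [|q a IH] hp; first by rewrite /valid /= eqxx.
rewrite size_rcons in hp *.
have [/andP [/eqP hv /eqP hs] hle] := IH (ltnW hp).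
set j := size q in hv hs hle hp *.
set u := vend' q in hv hs hle *.
set F := fun e : V * Sin => PsiW (rcons (Bt j e.1) e.2).
have Qua : Qb j (Bt j) (vend' (rcons q a)) (u, a).
  by rewrite /Qb vend_rcons /= hv hs !eqxx.
have [e1 Qe1 emax] : exists2 e, Qb j (Bt j) (vend' (rcons q a)) e &
    forall e', Qb j (Bt j) (vend' (rcons q a)) e' -> F e' <= F e.
  have := arg_maxP F Qua; case.
  by move=> e Qe hmax; exists e => // e' /hmax.
rewrite /valid Bt_S; case: pickP => [e2 /andP [Qe2 /forallP he2] | hnone]; last first.
  have := hnone e1; rewrite Qe1 /=.
  suff -> : [forall e', Qb j (Bt j) (vend' (rcons q a)) e' ==> (F e' <= F e1)] by [].
  by apply/forallP => e'; apply/implyP => /emax.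
move: Qe2; rewrite /Qb => /and3P [/eqP hn2 /eqP hv2 /eqP hs2].
split.
- by rewrite vend_rcons hv2 hn2 size_rcons hs2 !eqxx.
- have := he2 (u, a); rewrite Qua /= => hle2.
  apply: le_trans hle2.
  rewrite (Psi_rcons _ _ _ _ _ x0) ?hw ?(ltnW hp) // (Psi_rcons _ _ _ _ _ x0) ?hs ?hw //.
  rewrite hv.
  have hm : Num.min (PsiW q) 0 <= Num.min (PsiW (Bt j u)) 0 := min0_mono hle.
  lra.
Qed.

Lemma size_Bt j v : (size (Bt j v) <= j)%N.
Proof.
elim: j v => [|j IH] v //; rewrite Bt_S; case: pickP => [e /andP [Qe _] | _].
- by move: Qe => /and3P [_ _ /eqP hs]; rewrite size_rcons hs.
- exact: leq_trans (IH v) (leqnSn j).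
Qed.

Lemma Bt_step j v : valid j.+1 v ->
  exists e : V * Sin, [/\ Bt j.+1 v = rcons (Bt j e.1) e.2, next e.1 e.2 = v & valid j e.1].
Proof.
rewrite /valid Bt_S; case: pickP => [e /andP [Qe _] | _].
- move: Qe; rewrite /Qb => /and3P [/eqP hn /eqP hv /eqP hs] _.
  by exists e; split => //; rewrite /valid hv hs !eqxx.
- case/andP => _ /eqP hs.
  by have := size_Bt j v; rewrite hs ltnn.
Qed.

Lemma Bt_take j v k : valid j v -> (k <= j)%N ->
  take k (Bt j v) = Bt k (vend' (take k (Bt j v))).
Proof.
elim: j v k => [|j IH] v k hv hk.
  by move: hk; rewrite leqn0 => /eqP ->.
have [e [hB hn hve]] := Bt_step hv.
have hs : size (Bt j e.1) = j by move: hve => /andP [_ /eqP].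
have hv1 : vend' (Bt j e.1) = e.1 by move: hve => /andP [/eqP].
move: hk; rewrite leq_eqVlt => /orP [/eqP -> | hk].
- rewrite take_oversize ?hB ?size_rcons ?hs // vend_rcons hv1 hn.
  by rewrite -hB.
- rewrite hB -cats1 takel_cat ?hs //; exact: IH.
Qed.

Definition good v := [&& (0 < layer v)%N, valid (layer v) v & closeb eps root next C w (Bt (layer v) v)].

Lemma layer_le v : (layer v <= n)%N.
Proof. by case: HG. Qed.

Lemma valid_vend j v : valid j v -> vend' (Bt j v) = v.
Proof. by case/andP => /eqP. Qed.

Lemma valid_size j v : valid j v -> size (Bt j v) = j.
Proof. by case/andP => _ /eqP. Qed.

Lemma good_of p : (0 < size p)%N -> (size p <= n)%N -> closeb eps root next C w p ->
  good (vend' p) /\ layer (vend' p) = size p.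
Proof.
move=> h0 hn hc.
have hl := layer_vend HG hn.
have [hv hle] := Bt_opt hn.
split => //.
rewrite /good hl h0 hv /=.
rewrite closebE // ?(valid_size hv) ?hw //.
move: hc; rewrite closebE ?hw // => hc; exact: lt_le_trans hc hle.
Qed.

Lemma good_valid v : good v -> valid (layer v) v.
Proof. by case/and3P. Qed.

Lemma good_Psi v : good v -> 0 < PsiW (Bt (layer v) v).
Proof.
case/and3P => h0 hv hc.
by move: hc; rewrite closebE // ?(valid_size hv) ?hw ?layer_le.
Qed.

Hypothesis Hsens : eps_sensitive n layer next root C eps.

Local Notation D2' := (fun k => D2 eps root next C (take k.+1 w)).

Lemma edge_layer q k : (k < size q)%N -> (size q <= n)%N -> layer (vend' (take k q)) = k.
Proof.
move=> hk hq; have hkq : (k <= size q)%N := ltnW hk.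
have hs := size_takel hkq.
by rewrite (layer_vend HG) hs // (leq_trans hkq hq).
Qed.

Section Constr.
Variable a0 : Sin.
Variable vD : V.
Hypothesis goodD : good vD.
Hypothesis maxD : forall v, good v -> (layer v <= layer vD)%N.

Local Notation D := (layer vD).
Definition BD := Bt D vD.
Definition P' := BD ++ nseq (n - D) a0.
Definition ps := [seq Bt (layer v) v | v <- enum V & good v && (v != vD)] ++ [:: P'].
Definition E := flatten (map (path_edges next root) ps).
Definition w' := mkseq (fun k => if (k < D)%N &&
     [exists e : V * Sin, [&& e \in E, layer e.1 == k & C e.1 e.2 == nth x0 w k]]
   then nth x0 w k else C (vend' (take k P')) (nth a0 P' k)) n.

Lemma D_pos : (0 < D)%N.
Proof. by case/and3P: goodD. Qed.

Lemma D_le : (D <= n)%N.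
Proof. exact: layer_le. Qed.

Lemma size_BD : size BD = D.
Proof. exact: valid_size (good_valid goodD). Qed.

Lemma size_P' : size P' = n.
Proof. by rewrite size_cat size_nseq size_BD subnKC // D_le. Qed.

Lemma size_w' : size w' = n.
Proof. by rewrite size_mkseq. Qed.

Lemma ps_inv q : q \in ps ->
  (exists2 v, good v & q = Bt (layer v) v /\ v != vD) \/ q = P'.
Proof.
rewrite mem_cat inE => /orP [/mapP [v] | /eqP ->]; last by right.
rewrite mem_filter => /andP [/andP [gv nv] _] ->; left; by exists v.
Qed.

Lemma ps_size q : q \in ps -> (0 < size q)%N /\ (size q <= n)%N.
Proof.
case/ps_inv => [[v gv [-> _]] | ->].
- rewrite (valid_size (good_valid gv)) layer_le; by case/and3P: gv.
- by rewrite size_P' leqnn (leq_trans D_pos D_le).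
Qed.

Lemma E_P' : {subset path_edges next root P' <= E}.
Proof.
move=> e he; apply/flatten_mapP; exists P' => //.
by rewrite mem_cat mem_seq1 eqxx orbT.
Qed.

Lemma E_good v : good v -> {subset path_edges next root (Bt (layer v) v) <= E}.
Proof.
move=> gv e he; case: (eqVneq v vD) => [ev | nv].
- apply: E_P'; rewrite /P' pe_cat mem_cat; apply/orP; left.
  by rewrite /BD -ev.
- apply/flatten_mapP; exists (Bt (layer v) v) => //.
  rewrite mem_cat; apply/orP; left; apply: map_f.
  by rewrite mem_filter gv nv mem_enum.
Qed.

Definition Fsel (t : V) : V * Sin :=
  let j := layer t in
  if (j <= D)%N then (vend' (take j.-1 (Bt j t)), nth a0 (Bt j t) j.-1)
  else (vend' (take j.-1 P'), nth a0 P' j.-1).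

Lemma E_Fsel e : e \in E -> e = Fsel (next e.1 e.2).
Proof.
rewrite /E => /(@flatten_mapP _ _ (path_edges next root) ps e) [q hq he].
have [k hk ->] := mem_pe next a0 he.
have [_ hqn] := ps_size hq.
rewrite /= (next_nth_pe _ _ _ hk).
have hs1 := size_takel hk.
have ht : layer (vend' (take k.+1 q)) = k.+1 by rewrite (layer_vend HG) hs1 // (leq_trans hk hqn).
rewrite /Fsel ht /=.
have key : forall B : seq Sin, take k.+1 q = B ->
    (vend' (take k q), nth a0 q k) = (vend' (take k B), nth a0 B k).
  by move=> B <-; rewrite take_takel ?nth_take.
case: (ps_inv hq) => [[v gv [eq _]] | eq].
- have hkl : (k.+1 <= layer v)%N by rewrite -(valid_size (good_valid gv)) -eq.
  rewrite (leq_trans hkl (maxD gv)); apply: key.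
  rewrite eq; exact: Bt_take (good_valid gv) hkl.
- case: (leqP k.+1 D) => hkD; last by rewrite eq.
  apply: key.
  have e1 : take k.+1 q = take k.+1 BD by rewrite eq /P' takel_cat ?size_BD.
  rewrite e1; exact: Bt_take (good_valid goodD) hkD.
Qed.

Lemma E_inj e1 e2 : e1 \in E -> e2 \in E -> next e1.1 e1.2 = next e2.1 e2.2 -> e1 = e2.
Proof. by move=> h1 h2 hn; rewrite (E_Fsel h1) (E_Fsel h2) hn. Qed.

Lemma ps_uniq : uniq (map vend' ps).
Proof.
rewrite map_cat cat_uniq /= andbT.
have hm : map vend' [seq Bt (layer v) v | v <- enum V & good v && (v != vD)] =
          [seq v <- enum V | good v && (v != vD)].
  rewrite -map_comp; apply: map_id_in => v; rewrite mem_filter => /andP [/andP [gv _] _].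
  exact: valid_vend (good_valid gv).
rewrite hm filter_uniq ?enum_uniq //= orbF mem_filter.
apply/negP => /andP [/andP [gP nP] _].
have hl : layer (vend' P') = n by rewrite (layer_vend HG) size_P'.
have := maxD gP; rewrite hl => hnD.
have eD : D = n by apply/eqP; rewrite eqn_leq D_le.
have hv : vend' P' = vD.
  by rewrite /P' -eD subnn cats0; exact: valid_vend (good_valid goodD).
by rewrite hv eqxx in nP.
Qed.

Lemma w'_nth k : (k < n)%N -> nth x0 w' k =
  if (k < D)%N && [exists e : V * Sin, [&& e \in E, layer e.1 == k & C e.1 e.2 == nth x0 w k]]
  then nth x0 w k else C (vend' (take k P')) (nth a0 P' k).
Proof. by move=> hk; rewrite nth_mkseq. Qed.

Lemma w'_agree e k : e \in E -> layer e.1 = k -> (k < D)%N ->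
  C e.1 e.2 = nth x0 w k -> nth x0 w' k = nth x0 w k.
Proof.
move=> he hl hk hC; rewrite w'_nth ?(leq_trans hk D_le) // hk /=.
suff -> : [exists e0 : V * Sin, [&& e0 \in E, layer e0.1 == k & C e0.1 e0.2 == nth x0 w k]] by [].
by apply/existsP; exists e; rewrite he hl hC !eqxx.
Qed.

Lemma edge_in_good v i : good v -> (i < layer v)%N ->
  (vend' (take i (Bt (layer v) v)), nth a0 (Bt (layer v) v) i) \in E.
Proof.
move=> gv hi; apply: (E_good gv).
rewrite -(@nth_pe _ _ next root (Bt (layer v) v) i (root, a0) a0) ?(valid_size (good_valid gv)) //.
by apply: mem_nth; rewrite size_pe (valid_size (good_valid gv)).
Qed.

Lemma bits_mono v : good v -> forall i,
  nth false (bitsw root next C w (Bt (layer v) v)) i ->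
  nth false (bitsw root next C w' (Bt (layer v) v)) i.
Proof.
move=> gv i.
have hsB := valid_size (good_valid gv).
have hlv := layer_le v.
case: (ltnP i (layer v)) => hi; last first.
  by rewrite nth_default // size_bitsw hsB ?hw.
rewrite !(nth_bitsw _ _ _ x0 x0) ?hsB ?hw ?size_w' //.
rewrite (nth_code _ _ _ _ a0) ?hsB // => /eqP hC; apply/eqP.
rewrite (@w'_agree _ i (edge_in_good gv hi)) //=.
- by rewrite edge_layer ?hsB.
- exact: leq_trans hi (maxD gv).
Qed.

Lemma close_ps q : q \in ps -> closeb eps root next C w' q.
Proof.
move=> hq; have [h0 hn] := ps_size hq.
rewrite closebE ?size_w' //.
case: (ps_inv hq) => [[v gv [-> _]] | ->].
- apply: lt_le_trans (good_Psi gv) _.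
  have hsB := valid_size (good_valid gv).
  apply: psi_mono; last exact: bits_mono.
  by rewrite !size_bitsw ?hsB ?hw ?size_w' ?layer_le.
- have hP := psi_ext (n - D) eps_lt1 (good_Psi goodD).
  apply: lt_le_trans hP _.
  apply: psi_mono.
    by rewrite size_cat size_nseq size_bitsw ?size_BD ?hw ?D_le // size_bitsw ?size_P' ?size_w' // subnKC ?D_le.
  move=> i; rewrite nth_cat size_bitsw ?size_BD ?hw ?D_le // nth_nseq.
  case: (ltnP i D) => hiD.
  + rewrite !(nth_bitsw _ _ _ x0 x0) ?size_BD ?hw ?D_le ?size_P' ?size_w' //;
      last exact: leq_trans hiD D_le.
    rewrite !(nth_code _ _ _ _ a0) ?size_BD ?size_P' //; last exact: leq_trans hiD D_le.
    have e1 : take i P' = take i BD by rewrite /P' takel_cat ?size_BD // ltnW.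
    have e2 : nth a0 P' i = nth a0 BD i by rewrite /P' nth_cat size_BD hiD.
    rewrite e1 e2 => /eqP hC; apply/eqP.
    rewrite (@w'_agree _ i (edge_in_good goodD hiD)) //=.
    by rewrite edge_layer ?(valid_size (good_valid goodD)) ?D_le.
  + case: ifP => // hin _.
    have hi : (i < n)%N by move: hin; rewrite ltn_subRL subnKC ?D_le.
    rewrite (nth_bitsw _ _ _ x0 x0) ?size_P' ?size_w' // w'_nth //.
    rewrite ltnNge hiD /= (nth_code _ _ _ _ a0) ?size_P' //.
Qed.

Lemma ps_tree : prefix_tree n next root C eps w' ps.
Proof.
split.
- move=> p hp; have [h0 hn] := ps_size hp; split => //.
  exact: close_ps hp.
- exact: ps_uniq.
- move=> e1 e2 h1 h2; exact: E_inj.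
Qed.

Lemma in_iota0 k m : (k \in iota 0 m) = (k < m)%N.
Proof. by rewrite mem_iota add0n leq0n. Qed.

Definition Aw (e : V * Sin) := onth w' (layer e.1) == Some (C e.1 e.2).

Lemma exists_f k : (k < n)%N -> exists e, [&& e \in E, layer e.1 == k & Aw e].
Proof.
move=> hk.
case h: ((k < D)%N && [exists e : V * Sin, [&& e \in E, layer e.1 == k & C e.1 e.2 == nth x0 w k]]).
- case/andP: (h) => hkD /existsP [e /and3P [he /eqP hl /eqP hC]].
  exists e; rewrite he hl eqxx /Aw hl (onth_nthE x0) ?size_w' // w'_nth // h.
  by rewrite hC eqxx.
- pose e := (vend' (take k P'), nth a0 P' k).
  have he : e \in E.
    apply: E_P'; rewrite /e -(@nth_pe _ _ next root P' k (root, a0) a0) ?size_P' //.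
    by apply: mem_nth; rewrite size_pe size_P'.
  have hl : layer e.1 = k by rewrite /= edge_layer ?size_P'.
  exists e; rewrite he hl eqxx /Aw hl (onth_nthE x0) ?size_w' // w'_nth // h.
  by rewrite /e /= eqxx.
Qed.

Lemma last_edge p k : size p = k.+1 -> (k < n)%N -> closeb eps root next C w p ->
  exists e, [/\ e \in E, layer e.1 = k, Aw e & next e.1 e.2 = vend' p].
Proof.
move=> hs hk hc.
have hp0 : (0 < size p)%N by rewrite hs.
have hpn : (size p <= n)%N by rewrite hs.
have [gu hlu] := good_of hp0 hpn hc.
rewrite hs in hlu.
set u := vend' p in gu hlu *.
have hv := good_valid gu.
set B := Bt (layer u) u.
have hsB : size B = k.+1 by rewrite /B (valid_size hv) hlu.
pose e := (vend' (take k B), nth a0 B k).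
have hkB : (k < size B)%N by rewrite hsB.
have he : e \in E by apply: edge_in_good; rewrite ?hlu.
have hl : layer e.1 = k by rewrite /= edge_layer ?hsB.
have hkD : (k < D)%N by have := maxD gu; rewrite hlu.
have hbit : nth false (bitsw root next C w B) k.
  have := psi_last eps_gt0 (good_Psi gu).
  rewrite size_bitsw ?hsB ?hw //; exact.
have hC : C e.1 e.2 = nth x0 w k.
  move: hbit; rewrite (nth_bitsw _ _ _ x0 x0) ?hsB ?hw //.
  by rewrite (nth_code _ _ _ _ a0) ?hsB // => /eqP.
exists e; split => //.
- by rewrite /Aw hl (onth_nthE x0) ?size_w' // (w'_agree he hl hkD hC) hC.
- rewrite /= (next_nth_pe _ _ _ hkB) take_oversize ?hsB //.
  exact: (valid_vend hv).
Qed.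

Lemma exists_g k : (k < n)%N -> D2 eps root next C (take k.+1 w) ->
  forall f0, exists e, [&& e \in E, layer e.1 == k, Aw e & e != f0].
Proof.
move=> hk /existsP [t1 /existsP [t2 /and3P [c1 c2 hne]]] f0.
have hsz : size (take k.+1 w) = k.+1 by rewrite size_takel ?hw.
have s1 : size (val t1) = k.+1 by rewrite size_tuple.
have s2 : size (val t2) = k.+1 by rewrite size_tuple.
have cc1 : closeb eps root next C w (val t1) by rewrite /closeb s1.
have cc2 : closeb eps root next C w (val t2) by rewrite /closeb s2.
have [e1 [he1 hl1 hA1 hn1]] := last_edge s1 hk cc1.
have [e2 [he2 hl2 hA2 hn2]] := last_edge s2 hk cc2.
have ne : e1 != e2 by apply/eqP => eq; move: hne; rewrite -hn1 -hn2 eq eqxx.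
case: (eqVneq e1 f0) => [ef | nf].
- exists e2; rewrite he2 hl2 eqxx hA2 /=; by rewrite -ef eq_sym.
- by exists e1; rewrite he1 hl1 eqxx hA1 nf.
Qed.

Definition fE k := odflt (root, a0) [pick e | [&& e \in E, layer e.1 == k & Aw e]].

Lemma fE_spec k : (k < n)%N -> [&& fE k \in E, layer (fE k).1 == k & Aw (fE k)].
Proof.
move=> hk; rewrite /fE; case: pickP => [e he | hn] //=.
by have [e he] := exists_f hk; rewrite hn in he.
Qed.

Definition gE k := odflt (root, a0) [pick e | [&& e \in E, layer e.1 == k, Aw e & e != fE k]].

Lemma gE_spec k : (k < n)%N -> D2 eps root next C (take k.+1 w) ->
  [&& gE k \in E, layer (gE k).1 == k, Aw (gE k) & gE k != fE k].
Proof.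
move=> hk hD; rewrite /gE; case: pickP => [e he | hn] //=.
by have [e he] := exists_g hk hD (fE k); rewrite hn in he.
Qed.

Lemma agr_lb : (n + count D2' (iota 0 n) <= agr layer next root C w' ps)%N.
Proof.
set L0 := map fE (iota 0 n) ++ map gE [seq k <- iota 0 n | D2' k].
have hsize : size L0 = (n + count D2' (iota 0 n))%N.
  by rewrite size_cat !size_map size_iota size_filter.
rewrite -hsize /agr -/E -size_filter.
apply: uniq_leq_size.
- rewrite cat_uniq; apply/and3P; split.
  + rewrite map_inj_in_uniq ?iota_uniq // => k1 k2.
    rewrite !in_iota0 => h1 h2 heq.
    have := fE_spec h1; have := fE_spec h2; rewrite heq.
    by case/and3P => _ /eqP -> _ /and3P [_ /eqP -> _].
  + apply/hasPn => y /mapP [k]; rewrite mem_filter in_iota0 => /andP [hD hk] ->.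
    apply/negP => /mapP [k']; rewrite in_iota0 => hk' heq.
    have := gE_spec hk hD; case/and4P => _ /eqP hl _ hne.
    have := fE_spec hk'; case/and3P => _ /eqP hl' _.
    have ekk : k = k' by rewrite -hl -hl' heq.
    by move: hne; rewrite heq ekk eqxx.
  + rewrite map_inj_in_uniq ?filter_uniq ?iota_uniq // => k1 k2.
    rewrite !mem_filter !in_iota0 => /andP [hD1 h1] /andP [hD2 h2] heq.
    have := gE_spec h1 hD1; have := gE_spec h2 hD2; rewrite heq.
    by case/and4P => _ /eqP -> _ _ /and4P [_ /eqP -> _ _].
- move=> e; rewrite mem_cat => /orP [] /mapP [k].
  + rewrite in_iota0 => hk ->.
    case/and3P: (fE_spec hk) => he _ hA.
    by rewrite mem_filter mem_undup he andbT; exact: hA.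
  + rewrite mem_filter in_iota0 => /andP [hD hk] ->.
    case/and4P: (gE_spec hk hD) => he _ hA _.
    by rewrite mem_filter mem_undup he andbT; exact: hA.
Qed.

Lemma part1_constr : (count D2' (iota 0 n))%:R <= eps * n%:R.
Proof.
have h := Hsens size_w' ps_tree.
have h2 := agr_lb.
have h3 : ((n + count D2' (iota 0 n))%N%:R : R) <= (agr layer next root C w' ps)%:R.
  by rewrite ler_nat.
move: h3; rewrite natrD => h3.
have := le_trans h3 h; rewrite mulrDl mul1r; lra.
Qed.

End Constr.

Lemma part1 : (count D2' (iota 0 n))%:R <= eps * n%:R.
Proof.
case: (boolP (has D2' (iota 0 n))) => hhas; last first.
  rewrite has_count -leqNgt leqn0 in hhas; rewrite (eqP hhas) mulr_ge0 // ltW //.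
have [k0 hk0 hD0] := hasP hhas.
move: hk0; rewrite in_iota0 => hk0.
move: hD0 => /existsP [t1 /existsP [t2 /and3P [c1 _ _]]].
have hsz : size (take k0.+1 w) = k0.+1 by rewrite size_takel ?hw.
have s1 : size (val t1) = k0.+1 by rewrite size_tuple.
have a0 : Sin by case: (val t1) s1 => [|a _] // _; exact: a.
have cc1 : closeb eps root next C w (val t1) by rewrite /closeb s1.
have hp0 : (0 < size (val t1))%N by rewrite s1.
have hpn : (size (val t1) <= n)%N by rewrite s1.
have [g0 _] := good_of hp0 hpn cc1.
pose vD := [arg max_(v > vend' (val t1) | good v) layer v].
case: (arg_maxnP layer g0) => v gv hmax.
exact: (@part1_constr a0 v gv hmax).
Qed.

End Tree.

Unset Implicit Arguments. Set Strict Implicit. Set Printing Implicit Defensive.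

Theorem theorem5p11 (R : realFieldType) (eps : R) (n : nat)
  (Sin Sout V : finType) (layer : V -> nat) (root : V) (next : V -> Sin -> V)
  (C : V -> Sin -> Sout) :
  0 < eps ->
  layered_graph n layer root next ->
  eps_sensitive n layer next root C eps ->
  forall (x : seq Sin) (w : seq Sout), size x = n -> size w = n ->
  (count (fun k =>
      (onth (code_of next root C x) k == onth w k) &&
      (CDec next root C eps (take k.+1 w) != Some (vend next root (take k.+1 x))))
     (iota 0 n))%:R <= 2 * eps * n%:R.
Proof.
move=> heps HG Hsens x w hx hw.
have hn0 : (0 : R) <= n%:R by rewrite ler0n.
case: (lerP (1/2) eps) => he.
  set F := fun k => _.
  have hc : (count F (iota 0 n) <= n)%N.
    by rewrite -{2}(size_iota 0 n) count_size.
  have : (count F (iota 0 n))%:R <= (n%:R : R) by rewrite ler_nat.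
  nra.
have he1 : eps < 1 by lra.
case: w hw => [|x0 w'] hw.
  by rewrite -hw /= mulr0.
move: hw; set w := x0 :: w' => hw.
set F := fun k => _.
set D2p := fun k => D2 eps root next C (take k.+1 w).
set A2 := fun k => (onth (code_of next root C x) k == onth w k) &&
                   ~~ closeb eps root next C w (take k.+1 x).
have h1 := part1 heps he1 HG hw x0 Hsens.
have h2 := part2 root next C heps he1 x0 hx hw.
have hle : (count F (iota 0 n) <= count D2p (iota 0 n) + count A2 (iota 0 n))%N.
  rewrite -count_predUI.
  apply: leq_trans (leq_addr _ _).
  have -> : count F (iota 0 n) = count (fun k => (k < n)%N && F k) (iota 0 n).
    by apply: eq_in_count => k; rewrite mem_iota add0n leq0n /= => ->.
  apply: sub_count => k /andP [hk hF].
  exact: (part3 hx hw hk hF).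
have : (count F (iota 0 n))%:R <= ((count D2p (iota 0 n) + count A2 (iota 0 n))%N%:R : R).
  by rewrite ler_nat.
rewrite natrD => h3.
have : (count F (iota 0 n))%:R <= eps * n%:R + eps * n%:R.
  apply: le_trans h3 _; apply: lerD; [exact: h1 | exact: h2].
lra.
Qed.
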